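(* Let $\phi:(\mathcal C,S)\to(\mathcal D,T)$ be an admissible morphism from a finite quasi-schemoid $(\mathcal C,S)$ whose underlying category is a groupoid to a basic quasi-schemoid $(\mathcal D,T)$. Then for each $\sigma\in S$ there is a positive integer $n^\phi_\sigma$ such that for every $x\in ob(\mathcal C)$ and every $g\in\phi(\sigma)$ with $t(g)=\phi(x)$, $$\#\big(\phi^{-1}(g)\cap x\sigma\big)=n^\phi_\sigma,$$ where $x\sigma=\{f\in\sigma: t(f)=x\}$.
   Context: Write $s(f),t(f)$ for source and target. A quasi-schemoid is a pair $(\mathcal C,S)$ with $\mathcal C$ a small category and $S$ a partition of $mor(\mathcal C)$ into nonempty blocks such that for all $\sigma,\tau,\mu\in S$ and $f,g\in\mu$ the sets $\{(a,b)\in\sigma\times\tau: s(a)=t(b), a\circ b=f\}$ and the analogous set for $g$ have equal cardinality, denoted $p^\mu_{\sigma\tau}$. It is finite if $mor(\mathcal C)$ is finite; unital if every block meeting $\{1_x:x\in ob(\mathcal C)\}$ is contained in it; basic if it is unital and $\mathcal C$ is a groupoid. A morphism of quasi-schemoids $\phi$ is a functor such that each $\phi(\sigma)$ lies in a (unique) block of the target; by abuse, $\phi(\sigma)$ denotes that block. $\phi$ is admissible if for every $x\in ob(\mathcal C)$, $\sigma\in S$ and $g\in\phi(\sigma)$ with $t(g)=\phi(x)$ there exists $f\in\sigma$ with $t(f)=x$ and $\phi(f)=g$. *)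

(* Defs.v *)
From Stdlib Require Import List Arith.

Set Implicit Arguments.
Unset Strict Implicit.

(* A small category, with composition a total function that is only
   constrained on composable pairs (s(a) = t(b) for a o b). *)
Record category := Category {
  Ob : Type;
  Mor : Type;
  src : Mor -> Ob;
  tgt : Mor -> Ob;
  idm : Ob -> Mor;
  comp : Mor -> Mor -> Mor;          (* comp a b = a o b *)
  src_idm : forall x, src (idm x) = x;
  tgt_idm : forall x, tgt (idm x) = x;
  src_comp : forall a b, src a = tgt b -> src (comp a b) = src b;
  tgt_comp : forall a b, src a = tgt b -> tgt (comp a b) = tgt a;
  comp_idl : forall f, comp (idm (tgt f)) f = f;
  comp_idr : forall f, comp f (idm (src f)) = f;
  comp_assoc : forall a b c, src a = tgt b -> src b = tgt c ->
                 comp a (comp b c) = comp (comp a b) c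
}.

Definition equinumerous (A B : Type) : Prop :=
  exists (f : A -> B) (g : B -> A),
    (forall a, g (f a) = a) /\ (forall b, f (g b) = b).

Definition is_equivalence (A : Type) (R : A -> A -> Prop) : Prop :=
  (forall a, R a a) /\ (forall a b, R a b -> R b a) /\
  (forall a b c, R a b -> R b c -> R a c).

(* A partition of mor(C) into nonempty blocks is given by an equivalence
   relation S; the block of f is {h | S f h}. *)
Definition quasi_schemoid (C : category) (S : Mor C -> Mor C -> Prop) : Prop :=
  is_equivalence S /\
  forall (sig tau f g : Mor C), S f g ->
    equinumerous
      {ab : Mor C * Mor C | S sig (fst ab) /\ S tau (snd ab) /\
         src (fst ab) = tgt (snd ab) /\ comp (fst ab) (snd ab) = f}
      {ab : Mor C * Mor C | S sig (fst ab) /\ S tau (snd ab) /\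
         src (fst ab) = tgt (snd ab) /\ comp (fst ab) (snd ab) = g}.

Definition finite_mor (C : category) : Prop :=
  exists l : list (Mor C), forall f, In f l.

Definition unital (C : category) (S : Mor C -> Mor C -> Prop) : Prop :=
  forall (x : Ob C) (f : Mor C), S (idm x) f -> exists y, f = idm y.

Definition groupoid (C : category) : Prop :=
  forall f : Mor C, exists h : Mor C,
    src h = tgt f /\ tgt h = src f /\
    comp f h = idm (tgt f) /\ comp h f = idm (src f).

Definition basic (C : category) (S : Mor C -> Mor C -> Prop) : Prop :=
  unital S /\ groupoid C.

Definition is_functor (C D : category) (Fo : Ob C -> Ob D) (Fm : Mor C -> Mor D)
  : Prop :=
  (forall f, src (Fm f) = Fo (src f)) /\
  (forall f, tgt (Fm f) = Fo (tgt f)) /\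
  (forall x, Fm (idm x) = idm (Fo x)) /\
  (forall a b, src a = tgt b -> Fm (comp a b) = comp (Fm a) (Fm b)).

Definition qs_morphism (C D : category) (S : Mor C -> Mor C -> Prop)
  (T : Mor D -> Mor D -> Prop) (Fo : Ob C -> Ob D) (Fm : Mor C -> Mor D)
  : Prop :=
  is_functor Fo Fm /\ (forall f f', S f f' -> T (Fm f) (Fm f')).

(* admissibility; the block sigma is represented by any f0 in it, and
   phi(sigma) is the T-block of Fm f0 *)
Definition admissible (C D : category) (S : Mor C -> Mor C -> Prop)
  (T : Mor D -> Mor D -> Prop) (Fo : Ob C -> Ob D) (Fm : Mor C -> Mor D)
  : Prop :=
  forall (x : Ob C) (f0 : Mor C) (g : Mor D),
    T (Fm f0) g -> tgt g = Fo x ->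
    exists f, S f0 f /\ tgt f = x /\ Fm f = g.

(* Main.v *)
Require Import Defs.
From Stdlib Require Import List Arith.
From Stdlib Require Import ClassicalEpsilon FunctionalExtensionality PropExtensionality ProofIrrelevance Lia.

Lemma eqn_sym' A B : equinumerous A B -> equinumerous B A.
Proof. intros [f [g [H1 H2]]]. exists g, f. split; assumption. Qed.

Lemma eqn_trans' A B C : equinumerous A B -> equinumerous B C -> equinumerous A C.
Proof.
  intros [f [g [H1 H2]]] [f' [g' [H1' H2']]].
  exists (fun a => f' (f a)), (fun c => g (g' c)).
  split; intros; [rewrite H1', H1 | rewrite H2, H2']; reflexivity.
Qed.

Lemma sig_ext (A:Type) (P:A->Prop) (u v : {a|P a}) :
  proj1_sig u = proj1_sig v -> u = v.
Proof. destruct u, v; simpl; intros ->. f_equal; apply proof_irrelevance. Qed.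

Lemma raw_equi (A B : Type) (P : A -> Prop) (Q : B -> Prop) (f : A -> B) (g : B -> A) :
  (forall a, P a -> Q (f a)) -> (forall b, Q b -> P (g b)) ->
  (forall a, P a -> g (f a) = a) -> (forall b, Q b -> f (g b) = b) ->
  equinumerous {a | P a} {b | Q b}.
Proof.
  intros H1 H2 H3 H4.
  exists (fun u => exist _ (f (proj1_sig u)) (H1 _ (proj2_sig u))),
         (fun v => exist _ (g (proj1_sig v)) (H2 _ (proj2_sig v))).
  split; intros [a p]; apply sig_ext; simpl; auto.
Qed.

Lemma equi_raw (A B : Type) (P : A -> Prop) (Q : B -> Prop) (a0 : A) (b0 : B) :
  equinumerous {a | P a} {b | Q b} ->
  exists (f : A -> B) (g : B -> A),
  (forall a, P a -> Q (f a) /\ g (f a) = a) /\ (forall b, Q b -> P (g b) /\ f (g b) = b).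
Proof.
  intros [F [G [H1 H2]]].
  exists (fun a => match excluded_middle_informative (P a) with
                   | left p => proj1_sig (F (exist _ a p)) | right _ => b0 end).
  exists (fun b => match excluded_middle_informative (Q b) with
                   | left q => proj1_sig (G (exist _ b q)) | right _ => a0 end).
  split.
  - intros a Pa. destruct (excluded_middle_informative (P a)) as [p|np]; [|contradiction].
    split; [exact (proj2_sig _)|].
    destruct (excluded_middle_informative (Q _)) as [q|nq]; [|exfalso; apply nq; exact (proj2_sig _)].
    assert (E : exist _ (proj1_sig (F (exist _ a p))) q = F (exist _ a p)) by (apply sig_ext; reflexivity).
    rewrite E, H1. reflexivity.
  - intros b Qb. destruct (excluded_middle_informative (Q b)) as [q|nq]; [|contradiction].
    split; [exact (proj2_sig _)|].
    destruct (excluded_middle_informative (P _)) as [p|np]; [|exfalso; apply np; exact (proj2_sig _)].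
    assert (E : exist _ (proj1_sig (G (exist _ b q))) p = G (exist _ b q)) by (apply sig_ext; reflexivity).
    rewrite E, H2. reflexivity.
Qed.

Lemma fin_count (A:Type) (a0 : A) (l : list A) : forall P : A -> Prop,
  (forall a, P a -> In a l) ->
  exists n (f : A -> nat) (g : nat -> A),
    (forall a, P a -> f a < n /\ g (f a) = a) /\
    (forall k, k < n -> P (g k) /\ f (g k) = k).
Proof.
  induction l as [|x l IH]; intros P HP.
  - exists 0, (fun _ => 0), (fun _ => a0). split.
    + intros a Pa. destruct (HP a Pa).
    + intros k Hk. lia.
  - destruct (IH (fun a => P a /\ a <> x)) as [n' [f [g [H1 H2]]]].
    { intros a [Pa nax]. destruct (HP a Pa) as [<-|?]; [contradiction|assumption]. }
    destruct (excluded_middle_informative (P x)) as [Px|nPx].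
    + exists (S n').
      exists (fun a => if excluded_middle_informative (a = x) then n' else f a).
      exists (fun k => if excluded_middle_informative (k = n') then x else g k).
      split.
      * intros a Pa. destruct (excluded_middle_informative (a = x)) as [e|ne].
        { subst. split; [lia|]. destruct (excluded_middle_informative (n' = n')); congruence. }
        destruct (H1 a (conj Pa ne)) as [h1 h2].
        split; [lia|]. destruct (excluded_middle_informative (f a = n')); [lia|assumption].
      * intros k Hk. destruct (excluded_middle_informative (k = n')) as [e|ne].
        { split; [assumption|]. destruct (excluded_middle_informative (x = x)); congruence. }
        destruct (H2 k ltac:(lia)) as [[h1 h3] h2].
        split; [assumption|]. destruct (excluded_middle_informative (g k = x)); [contradiction|assumption].
    + exists n', f, g. split.
      * intros a Pa. apply H1. split; [assumption|]. intros ->. contradiction.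
      * intros k Hk. destruct (H2 k Hk) as [[h1 _] h2]. auto.
Qed.

Arguments raw_equi {A B P Q}.
Arguments equi_raw {A B P Q}.
Arguments fin_count {A}.

Theorem lemma6p5 (C D : category)
  (S : Mor C -> Mor C -> Prop) (T : Mor D -> Mor D -> Prop)
  (Fo : Ob C -> Ob D) (Fm : Mor C -> Mor D)
  (hS : quasi_schemoid S) (hfin : finite_mor C) (hgpd : groupoid C)
  (hT : quasi_schemoid T) (hbas : basic T)
  (hphi : qs_morphism S T Fo Fm) (hadm : admissible S T Fo Fm) :
  forall sig : Mor C, exists n : nat, 0 < n /\
    forall (x : Ob C) (g : Mor D), T (Fm sig) g -> tgt g = Fo x ->
      equinumerous {f : Mor C | Fm f = g /\ S sig f /\ tgt f = x}
                   {k : nat | k < n}.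
Proof.
  intros sig.
  destruct hS as [[Srefl [Ssym Strans]] hSq].
  destruct hbas as [hunit _].
  destruct hphi as [[Fsrc [Ftgt [Fid Fcomp]]] Smap].
  set (inv := fun f => proj1_sig (constructive_indefinite_description _ (hgpd f))).
  assert (Hinv : forall f, src (inv f) = tgt f /\ tgt (inv f) = src f /\
    comp f (inv f) = idm (tgt f) /\ comp (inv f) f = idm (src f)).
  { intros f. exact (proj2_sig (constructive_indefinite_description _ (hgpd f))). }
  set (K := fun b => exists y, Fm b = idm y).
  assert (Kcl : forall b b', K b -> S b b' -> K b').
  { intros b b' [y Hy] Hs. pose proof (Smap _ _ Hs) as HT. rewrite Hy in HT.
    exact (hunit _ _ HT). }
  set (Q := fun f (y : Mor C * Mor C) => S sig (fst y) /\ K (snd y) /\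
             src (fst y) = tgt (snd y) /\ comp (fst y) (snd y) = f).
  assert (Step1 : forall f1, S sig f1 ->
    equinumerous {f : Mor C | Fm f = Fm f1 /\ S sig f /\ tgt f = tgt f1} {y | Q f1 y}).
  { intros f1 Hf1.
    apply (raw_equi (fun a => (a, comp (inv a) f1)) fst).
    - intros a [Ha1 [Ha2 Ha3]]. destruct (Hinv a) as [i1 [i2 [i3 i4]]].
      unfold Q; simpl. split; [assumption|]. split; [|split].
      + exists (Fo (src a)). rewrite Fcomp by congruence. rewrite <- Ha1.
        rewrite <- Fcomp by congruence. rewrite i4. apply Fid.
      + rewrite tgt_comp by congruence. congruence.
      + rewrite comp_assoc by congruence. rewrite i3, Ha3. apply comp_idl.
    - intros [a b] [q1 [[y Hy] [q3 q4]]]; simpl in *. split; [|split].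
      + rewrite <- q4, Fcomp by assumption. rewrite Hy.
        assert (E : y = src (Fm a)).
        { rewrite Fsrc, q3, <- Ftgt, Hy. symmetry. apply tgt_idm. }
        rewrite E. symmetry. apply comp_idr.
      + assumption.
      + rewrite <- q4. symmetry. apply tgt_comp. assumption.
    - reflexivity.
    - intros [a b] [q1 [[y Hy] [q3 q4]]]; simpl in *. f_equal.
      destruct (Hinv a) as [i1 [i2 [i3 i4]]].
      rewrite <- q4. rewrite comp_assoc by congruence. rewrite i4, q3. apply comp_idl. }
  set (rep := fun b => epsilon (inhabits sig) (S b)).
  assert (rep_spec : forall b, S b (rep b)).
  { intros b. unfold rep. apply epsilon_spec. exists b. apply Srefl. }
  assert (rep_eq : forall b b', S b b' -> rep b = rep b').
  { intros b b' Hb. unfold rep. f_equal. apply functional_extensionality. intros c.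
    apply propositional_extensionality. split; intros; eauto. }
  assert (Step2 : forall f1 f2, S f1 f2 -> equinumerous {y | Q f1 y} {y | Q f2 y}).
  { intros f1 f2 H12.
    assert (Hfam : forall tau, exists (ph : (Mor C * Mor C -> Mor C * Mor C)) (ps : (Mor C * Mor C -> Mor C * Mor C)),
      (forall y, (S sig (fst y) /\ S tau (snd y) /\ src (fst y) = tgt (snd y) /\ comp (fst y) (snd y) = f1) ->
          (S sig (fst (ph y)) /\ S tau (snd (ph y)) /\ src (fst (ph y)) = tgt (snd (ph y)) /\ comp (fst (ph y)) (snd (ph y)) = f2) /\ ps (ph y) = y) /\
      (forall y, (S sig (fst y) /\ S tau (snd y) /\ src (fst y) = tgt (snd y) /\ comp (fst y) (snd y) = f2) ->
          (S sig (fst (ps y)) /\ S tau (snd (ps y)) /\ src (fst (ps y)) = tgt (snd (ps y)) /\ comp (fst (ps y)) (snd (ps y)) = f1) /\ ph (ps y) = y)).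
    { intros tau. apply (@equi_raw _ _ (fun y => S sig (fst y) /\ S tau (snd y) /\ src (fst y) = tgt (snd y) /\ comp (fst y) (snd y) = f1)
      (fun y => S sig (fst y) /\ S tau (snd y) /\ src (fst y) = tgt (snd y) /\ comp (fst y) (snd y) = f2) (sig, sig) (sig, sig)). apply hSq. assumption. }
    set (ph := fun tau => proj1_sig (constructive_indefinite_description _ (Hfam tau))).
    assert (Hph : forall tau, exists ps,
      (forall y, (S sig (fst y) /\ S tau (snd y) /\ src (fst y) = tgt (snd y) /\ comp (fst y) (snd y) = f1) ->
          (S sig (fst (ph tau y)) /\ S tau (snd (ph tau y)) /\ src (fst (ph tau y)) = tgt (snd (ph tau y)) /\ comp (fst (ph tau y)) (snd (ph tau y)) = f2) /\ ps (ph tau y) = y) /\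
      (forall y, (S sig (fst y) /\ S tau (snd y) /\ src (fst y) = tgt (snd y) /\ comp (fst y) (snd y) = f2) ->
          (S sig (fst (ps y)) /\ S tau (snd (ps y)) /\ src (fst (ps y)) = tgt (snd (ps y)) /\ comp (fst (ps y)) (snd (ps y)) = f1) /\ ph tau (ps y) = y)).
    { intros tau. exact (proj2_sig (constructive_indefinite_description _ (Hfam tau))). }
    set (ps := fun tau => proj1_sig (constructive_indefinite_description _ (Hph tau))).
    assert (Hps : forall tau,
      (forall y, (S sig (fst y) /\ S tau (snd y) /\ src (fst y) = tgt (snd y) /\ comp (fst y) (snd y) = f1) ->
          (S sig (fst (ph tau y)) /\ S tau (snd (ph tau y)) /\ src (fst (ph tau y)) = tgt (snd (ph tau y)) /\ comp (fst (ph tau y)) (snd (ph tau y)) = f2) /\ ps tau (ph tau y) = y) /\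
      (forall y, (S sig (fst y) /\ S tau (snd y) /\ src (fst y) = tgt (snd y) /\ comp (fst y) (snd y) = f2) ->
          (S sig (fst (ps tau y)) /\ S tau (snd (ps tau y)) /\ src (fst (ps tau y)) = tgt (snd (ps tau y)) /\ comp (fst (ps tau y)) (snd (ps tau y)) = f1) /\ ph tau (ps tau y) = y)).
    { intros tau. exact (proj2_sig (constructive_indefinite_description _ (Hph tau))). }
    clearbody ph ps.
    apply (raw_equi (fun y => ph (rep (snd y)) y) (fun y => ps (rep (snd y)) y)).
    - intros y [q1 [q2 [q3 q4]]].
      destruct (proj1 (Hps (rep (snd y))) y) as [[r1 [r2 [r3 r4]]] _].
      { repeat split; auto. }
      repeat split; auto. apply (Kcl (snd y)); eauto.
    - intros y [q1 [q2 [q3 q4]]].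
      destruct (proj2 (Hps (rep (snd y))) y) as [[r1 [r2 [r3 r4]]] _].
      { repeat split; auto. }
      repeat split; auto. apply (Kcl (snd y)); eauto.
    - intros y [q1 [q2 [q3 q4]]].
      destruct (proj1 (Hps (rep (snd y))) y) as [[r1 [r2 [r3 r4]]] r5].
      { repeat split; auto. }
      rewrite <- (rep_eq (snd y)) by eauto. exact r5.
    - intros y [q1 [q2 [q3 q4]]].
      destruct (proj2 (Hps (rep (snd y))) y) as [[r1 [r2 [r3 r4]]] r5].
      { repeat split; auto. }
      rewrite <- (rep_eq (snd y)) by eauto. exact r5. }
  destruct hfin as [l Hl].
  destruct (fin_count sig l (fun f => Fm f = Fm sig /\ S sig f /\ tgt f = tgt sig) (fun a _ => Hl a))
    as [n [fc [gc [Hc1 Hc2]]]].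
  exists n. split.
  { destruct (Hc1 sig (conj eq_refl (conj (Srefl sig) eq_refl))) as [h _]. lia. }
  intros x g HT Hx.
  destruct (hadm x sig g HT Hx) as [f1 [Hf1 [e1 e2]]]. subst x g.
  eapply eqn_trans'; [apply Step1; assumption|].
  eapply eqn_trans'; [apply Step2; apply Ssym; exact Hf1|].
  eapply eqn_trans'; [apply eqn_sym', Step1, Srefl|].
  apply (raw_equi fc gc).
  - intros a Pa. apply (Hc1 a Pa).
  - intros k Hk. apply (Hc2 k Hk).
  - intros a Pa. apply (Hc1 a Pa).
  - intros k Hk. apply (Hc2 k Hk).
Qed.
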